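(* Let $n \geq 3$ and let $\Delta = T_1 \times \cdots \times T_n$ be a Cartesian product of $n$ trees, regarded as a cube complex. Let $G$ be a group acting on $\Delta$ by cube-complex automorphisms, simply transitively (on the vertices), and let $P = G\backslash \Delta$ be the quotient cube complex. Label and orient the edges of $P$ as induced by the action (an oriented edge of $P$ starting at the base vertex is labelled by the element of $G$ carrying the base vertex of $\Delta$ to the terminus of a lift of that edge; reversing orientation corresponds to inversion of the label), and let $X$ be the set of labels on the edges of the cubes of $P$. Define $R \colon X^2 \to X^2$ as follows: if $x_i x_j x_k x_l$ is the boundary label of a square (2-cell) of $P$, then $R(x_i,x_j) = (x_l^{-1}, x_k^{-1})$; if $x_i$ and $x_j$ do not appear next to each other in a 2-cell of $P$, then $R(x_i,x_j) = (x_i,x_j)$. Then $R$ is a Drinfeld–Manin solution of the Yang–Baxter equation.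
   Context: A Drinfeld–Manin solution of the Yang–Baxter equation is a bijection $R \colon X^2 \to X^2$ on a non-empty set $X$ such that $R^{12}R^{23}R^{12} = R^{23}R^{12}R^{23}$ as maps $X^3 \to X^3$, where $R^{ij}$ denotes $R$ acting on the $i$-th and $j$-th components of $X^3$ (and the identity on the remaining component). *)

(* Defs.v *)
From Stdlib Require List.
From Stdlib Require Import ClassicalEpsilon.
From mathcomp Require Import all_boot.

Set Implicit Arguments.
Unset Strict Implicit.
Unset Printing Implicit Defensive.

Fixpoint chain {V : Type} (adj : V -> V -> Prop) (x : V) (s : seq V) : Prop :=
  match s with
  | [::] => True
  | y :: s' => adj x y /\ chain adj y s'
  end.

Definition is_tree {V : Type} (adj : V -> V -> Prop) : Prop :=
  [/\ (forall x y, adj x y -> adj y x),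
      (forall x, ~ adj x x),
      (forall x y, exists s, chain adj x s /\ last x s = y) &
      (forall x s, 2 <= size s -> List.NoDup (x :: s) -> chain adj x s ->
                   ~ adj (last x s) x)].

Definition has_edge {V : Type} (adj : V -> V -> Prop) : Prop :=
  exists x y, adj x y.

Section Product.
Variables (n : nat) (V : 'I_n -> Type) (adj : forall i, V i -> V i -> Prop).

Definition vtx := forall i : 'I_n, V i.

Definition adjD (u v : vtx) : Prop :=
  exists i, adj (u i) (v i) /\ forall j, j != i -> u j = v j.

(* vertex sets of cubes of Delta: products of vertices and edges of the
   factors; [a i = c i] gives a vertex factor, [adj (a i) (c i)] an edge. *)
Definition is_cube (C : vtx -> Prop) : Prop :=
  exists a c : vtx,
    (forall i, a i = c i \/ adj (a i) (c i)) /\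
    (forall v, C v <-> forall i, v i = a i \/ v i = c i).

Definition cube_aut (f : vtx -> vtx) : Prop :=
  bijective f /\
  forall C : vtx -> Prop, is_cube C <-> is_cube (fun v => exists u, C u /\ f u = v).

Definition is_square4 (a b c d : vtx) : Prop :=
  adjD a b /\ adjD b c /\ adjD c d /\ adjD d a /\
  a <> c /\ b <> d /\
  is_cube (fun v => v = a \/ v = b \/ v = c \/ v = d).
End Product.

Definition is_group {G : Type} (mul : G -> G -> G) (one : G) (inv : G -> G) : Prop :=
  [/\ (forall x y z, mul x (mul y z) = mul (mul x y) z),
      (forall x, mul one x = x) &
      (forall x, mul (inv x) x = one)].

Definition is_action {G T : Type} (mul : G -> G -> G) (one : G)
  (act : G -> T -> T) : Prop :=
  (forall v, act one v = v) /\ (forall g h v, act (mul g h) v = act g (act h v)).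

Definition simply_transitive {G T : Type} (act : G -> T -> T) : Prop :=
  forall u v : T, exists! g, act g u = v.

Definition R12 {X : Type} (R : X * X -> X * X) (t : X * X * X) : X * X * X :=
  let: (x, y, z) := t in let: (a, b) := R (x, y) in (a, b, z).
Definition R23 {X : Type} (R : X * X -> X * X) (t : X * X * X) : X * X * X :=
  let: (x, y, z) := t in let: (a, b) := R (y, z) in (x, a, b).

Definition DM_solution (X : Type) (R : X * X -> X * X) : Prop :=
  [/\ inhabited X, bijective R &
      forall t, R12 R (R23 R (R12 R t)) = R23 R (R12 R (R23 R t))].

Section Labels.
Variables (n : nat) (V : 'I_n -> Type) (adj : forall i, V i -> V i -> Prop).
Variables (G : Type) (mul : G -> G -> G) (act : G -> vtx V -> vtx V) (b : vtx V).

(* Labels of edges of P = G\Delta (b the base vertex): an oriented edge of P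
   at the base vertex lifts to an edge (b, act g b) of Delta and gets label g. *)
Definition label_set : Type := {g : G | adjD adj b (act g b)}.

(* (z, w) is R(x, y) in the "square" case: there is a square of P with boundary
   label x y k l, i.e. a square of Delta with vertices b, x.b, xy.b, xyk.b in
   cyclic order, and z = l^{-1} = xyk, w = k^{-1} (equivalently z w = x y). *)
Definition square_cond (x y : label_set) (p : label_set * label_set) : Prop :=
  is_square4 adj b (act (proj1_sig x) b) (act (mul (proj1_sig x) (proj1_sig y)) b) (act (proj1_sig p.1) b)
  /\ mul (proj1_sig p.1) (proj1_sig p.2) = mul (proj1_sig x) (proj1_sig y).

Definition YB_R (q : label_set * label_set) : label_set * label_set :=
  let: (x, y) := q in
  match excluded_middle_informative (exists p, square_cond x y p) with
  | left e => proj1_sig (constructive_indefinite_description _ e)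
  | right _ => (x, y)
  end.
End Labels.

(* Main.v *)
Require Import Defs.
From mathcomp Require Import all_boot.
From Stdlib Require Import ClassicalEpsilon Classical FunctionalExtensionality ProofIrrelevance.
Set Implicit Arguments. Unset Strict Implicit. Unset Printing Implicit Defensive.

Section Geo.
Variables (n : nat) (V : 'I_n -> Type) (adj : forall i, V i -> V i -> Prop).
Hypothesis adj_sym : forall i (x y : V i), adj x y -> adj y x.
Hypothesis adj_irr : forall i (x : V i), ~ adj x x.

Local Notation vtx := (vtx V).

Definition dir (u v : vtx) i := adj (u i) (v i) /\ forall k, k != i -> u k = v k.

Lemma vext (u v : vtx) : (forall k, u k = v k) -> u = v.
Proof. exact: functional_extensionality_dep. Qed.

Lemma dir_neq u v i : dir u v i -> u i <> v i.
Proof. by case=> h _ e; rewrite e in h; exact: adj_irr h. Qed.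

Lemma dir_uniq u v i j : dir u v i -> dir u v j -> i = j.
Proof.
move=> hi [_ hj]; case: (eqVneq i j) => // ne; exfalso.
by apply: (dir_neq hi); apply: hj.
Qed.

Lemma dir_sym u v i : dir u v i -> dir v u i.
Proof. by case=> h1 h2; split; [apply: adj_sym | move=> k /h2]. Qed.

Lemma adjD_sym u v : adjD adj u v -> adjD adj v u.
Proof. by case=> i h; exists i; apply: dir_sym. Qed.

Lemma dir_nvtx u v i : dir u v i -> u <> v.
Proof. by move=> h e; apply: (dir_neq h); rewrite e. Qed.

Definition mk (a c : vtx) j : vtx := fun k => if k == j then c k else a k.

Lemma sq_exists a b c i j : dir a b i -> dir b c j -> i != j ->
  is_square4 adj a b c (mk a c j).
Proof.
move=> [hab1 hab2] [hbc1 hbc2] ne.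
have ci : b i = c i by apply: hbc2.
have aj : a j = b j by apply: hab2; rewrite eq_sym.
split; first by exists i.
split; first by exists j.
split.
  exists i; split.
    by rewrite /mk (negbTE ne) -ci; apply: adj_sym.
  move=> k ki; rewrite /mk; case: eqP => // /eqP kj.
  by rewrite hab2 // hbc2.
split.
  exists j; split; first by rewrite /mk eqxx aj; apply: adj_sym.
  by move=> k kj; rewrite /mk (negbTE kj).
split.
  by move=> e; apply: (dir_neq (conj hab1 hab2)); rewrite ci e.
split.
  by move=> e; apply: (dir_neq (conj hbc1 hbc2)); rewrite e /mk eqxx.
exists a, c; split.
  move=> k; case: (eqVneq k i) => [->|ki]; first by right; rewrite -ci.
  case: (eqVneq k j) => [->|kj]; first by right; rewrite aj.
  by left; rewrite hab2 // hbc2.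
move=> v; split.
  case=> [->|[->|[->|->]]] k; rewrite /mk.
  - by left.
  - case: (eqVneq k i) => [->|ki]; first by right.
    by left; rewrite hab2.
  - by right.
  - by case: eqP; [right|left].
move=> hv.
have oth k : k != i -> k != j -> v k = a k.
  move=> ki kj; case: (hv k) => // ->; by rewrite hab2 // hbc2.
case: (classic (v i = a i)) => vi; case: (classic (v j = a j)) => vj.
- left; apply: vext => k.
  case: (eqVneq k i) => [->//|ki]; case: (eqVneq k j) => [->//|kj]; exact: oth.
- right; right; right; apply: vext => k; rewrite /mk.
  case: (eqVneq k j) => [->|kj]; first by case: (hv j).
  case: (eqVneq k i) => [->//|ki]; exact: oth.
- right; left; apply: vext => k.
  case: (eqVneq k i) => [->|ki]; first by case: (hv i) => // ->.
  case: (eqVneq k j) => [->|kj]; first by rewrite vj aj.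
  by rewrite oth // hab2.
- right; right; left; apply: vext => k.
  case: (eqVneq k i) => [->|ki]; first by case: (hv i).
  case: (eqVneq k j) => [->|kj]; first by case: (hv j).
  by rewrite oth // hab2 // hbc2.
Qed.


Lemma sq_dirs a b c d i j : dir a b i -> dir b c j -> is_square4 adj a b c d ->
  [/\ i != j, dir a d j & dir d c i].
Proof.
move=> hab hbc [_ [_ [[l hcd] [[k hda] [nac [nbd [A [C [_ hmem]]]]]]]]].
have hab' := hab; have hbc' := hbc.
move: hab hbc => [hab1 hab2] [hbc1 hbc2].
have ne : i != j.
  apply/negP => /eqP eij; subst j.
  have ain : forall i0, a i0 = A i0 \/ a i0 = C i0 by apply/hmem; left.
  have bin : forall i0, b i0 = A i0 \/ b i0 = C i0 by apply/hmem; right; left.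
  have cin : forall i0, c i0 = A i0 \/ c i0 = C i0 by apply/hmem; right; right; left.
  have nab : a i <> b i := dir_neq hab'.
  have nbc : b i <> c i := dir_neq hbc'.
  have nac' : a i <> c i.
    move=> e; apply: nac; apply: vext => m.
    case: (eqVneq m i) => [->//|mi]; by rewrite hab2 // hbc2.
  by case: (ain i) => ea; case: (bin i) => eb; case: (cin i) => ec; congruence.
have ci : b i = c i by apply: hbc2.
have aj : a j = b j by apply: hab2; rewrite eq_sym.
have acj : c j <> a j by rewrite aj => e; apply: (dir_neq hbc'); rewrite e.
have aci : a i <> c i by rewrite -ci; exact: (dir_neq hab').
have kj : k = j.
  case: (eqVneq k j) => // nkj; exfalso.
  have dj : d j = a j by apply: hda.2; rewrite eq_sym.
  have lj : l = j.
    case: (eqVneq l j) => // nlj; exfalso.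
    by apply: acj; rewrite -dj; apply: hcd.2; rewrite eq_sym.
  subst l.
  have ki : k = i.
    case: (eqVneq k i) => // nki; exfalso.
    apply: aci; rewrite -(hda.2 i) ?(eq_sym i) //.
    by rewrite (hcd.2 i) // eq_sym.
  subst k.
  apply: nbd; apply: vext => m.
  case: (eqVneq m i) => [->|mi].
    by rewrite ci (hcd.2 i) // eq_sym.
  by rewrite (hda.2 m) // hab2.
subst k.
have li : l = i.
  case: (eqVneq l i) => // nli; exfalso.
  apply: aci; rewrite (hcd.2 i) ?(eq_sym i) //.
  by rewrite (hda.2 i) // eq_sym.
subst l.
by split => //; apply: dir_sym.
Qed.

Lemma mid_unique u m m' w i j : dir u m i -> dir m w j -> dir u m' i -> dir m' w j ->
  i != j -> m = m'.
Proof.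
move=> [_ h1] [_ h2] [_ h3] [_ h4] ne; apply: vext => k.
case: (eqVneq k i) => [->|ki]; last by rewrite -h1 // h3.
by rewrite h2 // h4.
Qed.

Lemma sq_unique a b c d d' : is_square4 adj a b c d -> is_square4 adj a b c d' -> d = d'.
Proof.
move=> h h'; have [[i hab] [[j hbc] _]] := h.
have [ne h1 h2] := sq_dirs hab hbc h.
have [_ h1' h2'] := sq_dirs hab hbc h'.
by apply: (mid_unique h1 h2 h1' h2'); rewrite eq_sym.
Qed.

Definition flip (u v w : vtx) : vtx :=
  match excluded_middle_informative (exists d, is_square4 adj u v w d) with
  | left e => proj1_sig (constructive_indefinite_description _ e)
  | right _ => v
  end.

Lemma flip_sq u v w : (exists d, is_square4 adj u v w d) -> is_square4 adj u v w (flip u v w).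
Proof.
rewrite /flip => e; case: excluded_middle_informative => // e'.
exact: proj2_sig (constructive_indefinite_description _ e').
Qed.

Lemma flip_nosq u v w : ~ (exists d, is_square4 adj u v w d) -> flip u v w = v.
Proof. by rewrite /flip => e; case: excluded_middle_informative. Qed.

Lemma flip_diff u v w i j : dir u v i -> dir v w j -> i != j ->
  dir u (flip u v w) j /\ dir (flip u v w) w i.
Proof.
move=> h1 h2 ne.
have := flip_sq (ex_intro _ _ (sq_exists h1 h2 ne)).
by case/(sq_dirs h1 h2).
Qed.

Lemma flip_same u v w i : dir u v i -> dir v w i -> flip u v w = v.
Proof.
move=> h1 h2; apply: flip_nosq => -[d hd].
by have [] := sq_dirs h1 h2 hd; rewrite eqxx.
Qed.

Lemma flip_flip u v w : adjD adj u v -> adjD adj v w -> flip u (flip u v w) w = v.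
Proof.
move=> [i h1] [j h2]; case: (eqVneq i j) => [eij|ne].
  subst j; by rewrite !(flip_same h1 h2).
have [d1 d2] := flip_diff h1 h2 ne.
have ne' : j != i by rewrite eq_sym.
have [e1 e2] := flip_diff d1 d2 ne'.
exact: (mid_unique e1 e2 h1 h2).
Qed.

Definition F1 (v0 : vtx) (t : vtx * vtx * vtx) : vtx * vtx * vtx :=
  let: (p1, p2, p3) := t in (flip v0 p1 p2, p2, p3).
Definition F2 (v0 : vtx) (t : vtx * vtx * vtx) : vtx * vtx * vtx :=
  let: (p1, p2, p3) := t in (p1, flip p1 p2 p3, p3).

Lemma tri_unique u p q w p' q' a c e : dir u p a -> dir p q c -> dir q w e ->
  dir u p' a -> dir p' q' c -> dir q' w e -> a != c -> a != e -> c != e ->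
  p = p' /\ q = q'.
Proof.
move=> h1 h2 h3 h1' h2' h3' ac ae ce.
have pp : p = p'.
  apply: vext => k; case: (eqVneq k a) => [->|ka].
    rewrite (h2.2 a) // (h3.2 a) // (h2'.2 a) // (h3'.2 a) //.
  by rewrite -(h1.2 k) // (h1'.2 k).
split => //; subst p'; exact: (mid_unique h2 h3 h2' h3').
Qed.

Lemma braid v0 v1 v2 v3 i1 i2 i3 : dir v0 v1 i1 -> dir v1 v2 i2 -> dir v2 v3 i3 ->
  F1 v0 (F2 v0 (F1 v0 (v1, v2, v3))) = F2 v0 (F1 v0 (F2 v0 (v1, v2, v3))).
Proof.
move=> h1 h2 h3.
case: (eqVneq i1 i2) => [e12|n12].
  subst i2.
  have E1 : F1 v0 (v1, v2, v3) = (v1, v2, v3) by rewrite /= (flip_same h1 h2).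
  case: (eqVneq i1 i3) => [e13|n13].
    subst i3.
    have E2 : F2 v0 (v1, v2, v3) = (v1, v2, v3) by rewrite /= (flip_same h2 h3).
    by rewrite ?E1 ?E2 ?E1 ?E2.
  rewrite E1 /=.
  set u2 := flip v1 v2 v3.
  have [d1 d2] := flip_diff h2 h3 n13.
  have [e1 e2] := flip_diff h1 d1 n13.
  by rewrite (flip_same e2 d2).
set w1 := flip v0 v1 v2.
have [a1 a2] := flip_diff h1 h2 n12.
case: (eqVneq i2 i3) => [e23|n23].
  subst i3.
  have E2 : F2 v0 (v1, v2, v3) = (v1, v2, v3) by rewrite /= (flip_same h2 h3).
  rewrite E2 /= -/w1.
  have n21 : i1 != i2 := n12.
  have [b1 b2] := flip_diff a2 h3 n21.
  by rewrite (flip_same a1 b1).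
case: (eqVneq i1 i3) => [e13|n13].
  subst i3.
  rewrite /= -/w1.
  rewrite (flip_same a2 h3).
  have n21 : i2 != i1 by rewrite eq_sym.
  have [c1 c2] := flip_diff a1 a2 n21.
  rewrite (mid_unique c1 c2 h1 h2 n12).
  have [d1 d2] := flip_diff h2 h3 n21.
  rewrite (flip_same h1 d1).
  have [f1 f2] := flip_diff d1 d2 n12.
  by rewrite (mid_unique f1 f2 h2 h3 n21).
rewrite /= -/w1.
set w2 := flip w1 v2 v3.
have [b1 b2] := flip_diff a2 h3 n13.
have [c1 c2] := flip_diff a1 b1 n23.
set u2 := flip v1 v2 v3.
have [d1 d2] := flip_diff h2 h3 n23.
set u1 := flip v0 v1 u2.
have [e1 e2] := flip_diff h1 d1 n13.
have n21 : i2 != i1 by rewrite eq_sym.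
have [f1 f2] := flip_diff e2 d2 n12.
have n32 : i3 != i2 by rewrite eq_sym.
have n31 : i3 != i1 by rewrite eq_sym.
have [E1 E2] := tri_unique c1 c2 b2 e1 f1 f2 n32 n31 n21.
by rewrite /w2 /w1 /u1 /u2 E1 E2.
Qed.

Lemma is_cube_ext (C C' : vtx -> Prop) : (forall v, C v <-> C' v) ->
  is_cube adj C -> is_cube adj C'.
Proof.
move=> e [A [B [h1 h2]]]; exists A, B; split => // v.
by rewrite -e.
Qed.

Lemma edge_cube u v : adjD adj u v -> is_cube adj (fun w => w = u \/ w = v).
Proof.
move=> [i0 [h1 h2]]; exists u, v; split.
  move=> k; case: (eqVneq k i0) => [->|ki]; [by right | by left; apply: h2].
move=> w; split.
  by case=> -> k; [left|right].
move=> hw; case: (classic (w i0 = u i0)) => e.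
  left; apply: vext => k; case: (eqVneq k i0) => [->//|ki].
  by case: (hw k) => // ->; rewrite h2.
right; apply: vext => k; case: (eqVneq k i0) => [->|ki].
  by case: (hw i0).
by case: (hw k) => // ->; rewrite h2.
Qed.

Lemma cube_edge_aux p q : p <> q -> (forall i, p i = q i \/ adj (p i) (q i)) ->
  (forall w, (w = p \/ w = q) <-> forall i, w i = p i \/ w i = q i) -> adjD adj p q.
Proof.
move=> pq hA hmem.
have [i0 ne0] : exists i, p i <> q i.
  apply: NNPP => H; apply: pq; apply: vext => k; apply: NNPP => hk; apply: H.
  by exists k.
exists i0; split; first by case: (hA i0).
move=> k nk; apply: NNPP => hk.
pose w : vtx := fun m => if m == k then q m else p m.
have : w = p \/ w = q by apply/hmem => m; rewrite /w; case: eqP; [right|left].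
case=> e.
  apply: hk; have := congr1 (fun f : vtx => f k) e; rewrite /w eqxx => ->; done.
have := congr1 (fun f : vtx => f i0) e.
have ik : (i0 == k) = false by apply/negbTE; rewrite eq_sym.
by rewrite /w ik.
Qed.

Lemma cube_edge u v : u <> v -> is_cube adj (fun w => w = u \/ w = v) -> adjD adj u v.
Proof.
move=> uv [A [C [hA hmem]]].
have Ain : A = u \/ A = v by apply/hmem => i; left.
have Cin : C = u \/ C = v by apply/hmem => i; right.
have uin : forall i, u i = A i \/ u i = C i by apply/hmem; left.
have vin : forall i, v i = A i \/ v i = C i by apply/hmem; right.
have AC : A <> C.
  move=> e; subst C; apply: uv.
  by apply: vext => k; case: (uin k) => ->; case: (vin k) => ->.
case: Ain => eA; case: Cin => eC; subst.
- by case: AC.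
- exact: cube_edge_aux.
- apply: adjD_sym; apply: cube_edge_aux => // w.
  by rewrite -hmem; split; case; auto.
- by case: AC.
Qed.

Lemma aut_adj f u v : cube_aut adj f -> adjD adj u v -> adjD adj (f u) (f v).
Proof.
move=> [bij hc] h.
apply: cube_edge.
  move=> e; have := bij_inj bij e; case: h => i hi.
  by move=> e'; apply: (dir_nvtx hi).
have := (hc _).1 (edge_cube h).
apply: is_cube_ext => w; split.
  by move=> [x [[->|->] <-]]; [left|right].
by case=> ->; eexists; split; [left|idtac|right|idtac]; reflexivity.
Qed.

Lemma aut_sq f a b c d : cube_aut adj f -> is_square4 adj a b c d ->
  is_square4 adj (f a) (f b) (f c) (f d).
Proof.
move=> hf [h1 [h2 [h3 [h4 [h5 [h6 h7]]]]]].
have inj := bij_inj hf.1.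
do 4! (split; first exact: aut_adj).
split; first by move/inj.
split; first by move/inj.
have := (hf.2 _).1 h7.
apply: is_cube_ext => w; split.
  by move=> [x [[->|[->|[->|->]]] <-]]; auto.
case=> [->|[->|[->|->]]]; eexists; split; try reflexivity; auto.
Qed.

Variables (G : Type) (mul : G -> G -> G) (one : G) (inv : G -> G)
  (act : G -> vtx -> vtx) (b : vtx).
Hypotheses (hG : is_group mul one inv) (hA : is_action mul one act)
  (haut : forall g, cube_aut adj (act g)) (hst : simply_transitive act).

Local Notation L := (label_set adj act b).
Local Notation R := (@YB_R n V adj G mul act b).

Lemma mulA x y z : mul x (mul y z) = mul (mul x y) z.
Proof. by case: hG. Qed.
Lemma mul1 x : mul one x = x.
Proof. by case: hG. Qed.
Lemma mulV x : mul (inv x) x = one.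
Proof. by case: hG. Qed.
Lemma mulVr x : mul x (inv x) = one.
Proof.
rewrite -[mul x _]mul1 -{1}(mulV (inv x)) -mulA (mulA (inv x) x) mulV mul1.
exact: mulV.
Qed.
Lemma act1 v : act one v = v.
Proof. by case: hA. Qed.
Lemma actM g h v : act (mul g h) v = act g (act h v).
Proof. by case: hA. Qed.
Lemma actVK g v : act (inv g) (act g v) = v.
Proof. by rewrite -actM mulV act1. Qed.
Lemma act_b_inj g h : act g b = act h b -> g = h.
Proof.
move=> e; have [g0 [_ u]] := hst b (act g b).
by rewrite -(u g) // (u h).
Qed.
Lemma mul_cancel x y y' : mul x y = mul x y' -> y = y'.
Proof. by move=> e; rewrite -(mul1 y) -(mul1 y') -(mulV x) -!mulA e. Qed.
Lemma lab_eq (x y : L) : proj1_sig x = proj1_sig y -> x = y.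
Proof.
case: x => x hx; case: y => y hy /= e; subst y.
by rewrite (proof_irrelevance _ hx hy).
Qed.

Lemma flip_act g u v w : act g (flip u v w) = flip (act g u) (act g v) (act g w).
Proof.
case: (classic (exists d, is_square4 adj u v w d)) => [ex|nex].
  have s := flip_sq ex; have s' := aut_sq (haut g) s.
  apply: (sq_unique s'); apply: flip_sq; exists (act g (flip u v w)); exact: s'.
rewrite !flip_nosq //.
move=> [d hd]; apply: nex; exists (act (inv g) d).
by have := aut_sq (haut (inv g)) hd; rewrite !actVK.
Qed.

Lemma R_spec (x y : L) :
  mul (proj1_sig (R (x, y)).1) (proj1_sig (R (x, y)).2) = mul (proj1_sig x) (proj1_sig y) /\
  act (proj1_sig (R (x, y)).1) b =
    flip b (act (proj1_sig x) b) (act (mul (proj1_sig x) (proj1_sig y)) b).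
Proof.
rewrite /YB_R; case: excluded_middle_informative => [e|ne].
  have := proj2_sig (constructive_indefinite_description _ e).
  set p := proj1_sig _; case=> hsq hm; split => //.
  apply: (sq_unique hsq); apply: flip_sq; exists (act (proj1_sig p.1) b); exact: hsq.
split => //; rewrite flip_nosq //.
move=> [d hd]; apply: ne.
have hd' := hd; move: hd' => [_ [_ [hcd [hda _]]]].
have [z [hz _]] := hst b d.
have hz' : adjD adj b (act z b) by rewrite hz; apply: adjD_sym.
pose w := mul (inv z) (mul (proj1_sig x) (proj1_sig y)).
have hw' : adjD adj b (act w b).
  rewrite /w actM.
  have := aut_adj (haut (inv z)) (adjD_sym hcd).
  by rewrite -{1}hz actVK.
exists (exist _ z hz', exist _ w hw'); split => /=; first by rewrite hz.
by rewrite /w mulA mulVr mul1.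
Qed.

Definition Phi (t : L * L * L) : vtx * vtx * vtx :=
  let: (x, y, z) := t in
  (act (proj1_sig x) b, act (mul (proj1_sig x) (proj1_sig y)) b,
   act (mul (mul (proj1_sig x) (proj1_sig y)) (proj1_sig z)) b).

Lemma Phi_inj t t' : Phi t = Phi t' -> t = t'.
Proof.
case: t => [[x y] z]; case: t' => [[x' y'] z'] /= [e1 e2 e3].
have ex := act_b_inj e1.
have exy := act_b_inj e2.
have exyz := act_b_inj e3.
rewrite exy in exyz; have ez := mul_cancel exyz.
rewrite ex in exy; have ey := mul_cancel exy.
by rewrite (lab_eq ex) (lab_eq ey) (lab_eq ez).
Qed.

Lemma Phi_R12 t : Phi (R12 R t) = F1 b (Phi t).
Proof.
case: t => [[x y] z]; rewrite /R12.
have := R_spec x y.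
case: (R (x, y)) => x' y' /= [e1 e2].
by rewrite e2 e1.
Qed.

Lemma Phi_R23 t : Phi (R23 R t) = F2 b (Phi t).
Proof.
case: t => [[x y] z]; rewrite /R23.
have := R_spec y z.
case: (R (y, z)) => y' z' /= [e1 e2].
rewrite -mulA e1 mulA actM e2 flip_act -!actM mulA.
by rewrite -mulA.
Qed.

Lemma Phi_dirs t : exists i1 i2 i3, let: (v1, v2, v3) := Phi t in
  [/\ dir b v1 i1, dir v1 v2 i2 & dir v2 v3 i3].
Proof.
case: t => [[[x hx] [y hy]] [z hz]] /=.
have [i1 h1] := hx.
have [i2 h2] : adjD adj (act x b) (act (mul x y) b).
  by rewrite actM; apply: aut_adj.
have [i3 h3] : adjD adj (act (mul x y) b) (act (mul (mul x y) z) b).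
  by rewrite (actM (mul x y) z); apply: aut_adj.
by exists i1, i2, i3.
Qed.

Lemma R_invol p : R (R p) = p.
Proof.
case: p => x y.
have := R_spec x y.
case E: (R (x, y)) => [x' y'] [e1 e2]; rewrite /= in e1 e2.
have := R_spec x' y'.
case: (R (x', y')) => [x'' y''] [f1 f2]; rewrite /= in f1 f2.
have ex : x'' = x.
  apply: lab_eq; apply: act_b_inj; rewrite f2 e1 e2 flip_flip //.
    exact: (proj2_sig x).
  by rewrite actM; apply: aut_adj => //; exact: (proj2_sig y).
subst x''; f_equal; apply: lab_eq; apply: (@mul_cancel (proj1_sig x)).
by rewrite f1 e1.
Qed.

Lemma inh : (exists v, adjD adj b v) -> inhabited L.
Proof.
move=> [v hv]; have [g [hg _]] := hst b v.
by constructor; exists g; rewrite hg.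
Qed.

Lemma main : (exists v, adjD adj b v) -> DM_solution R.
Proof.
move=> hv; split; first exact: inh.
  by exists R => p; apply: R_invol.
move=> t; apply: Phi_inj.
rewrite ?Phi_R12 ?Phi_R23 ?Phi_R12 ?Phi_R23 ?Phi_R12 ?Phi_R23.
have [i1 [i2 [i3]]] := Phi_dirs t.
case: (Phi t) => [[v1 v2] v3] [h1 h2 h3].
exact: braid h1 h2 h3.
Qed.

End Geo.
Definition upd n (V : 'I_n -> Type) (v : vtx V) (i : 'I_n) (e : V i) : vtx V :=
  fun k => match i =P k with ReflectT h => eq_rect i V e k h | ReflectF _ => v k end.
Lemma upd_eq n (V : 'I_n -> Type) (v : vtx V) i (e : V i) : upd v e i = e.
Proof. rewrite /upd; case: eqP => // h; by rewrite (eq_irrelevance h erefl). Qed.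
Lemma upd_neq n (V : 'I_n -> Type) (v : vtx V) i (e : V i) k : k != i -> upd v e k = v k.
Proof. rewrite /upd => nk; case: eqP => // h; by subst; rewrite eqxx in nk. Qed.

Theorem theorem1 (n : nat) (V : 'I_n -> Type) (adj : forall i, V i -> V i -> Prop)
  (G : Type) (mul : G -> G -> G) (one : G) (inv : G -> G)
  (act : G -> vtx V -> vtx V) (b : vtx V) :
  3 <= n ->
  (forall i, is_tree (adj i)) ->
  (forall i, has_edge (adj i)) ->
  is_group mul one inv ->
  is_action mul one act ->
  (forall g, cube_aut adj (act g)) ->
  simply_transitive act ->
  DM_solution (@YB_R n V adj G mul act b).
Proof.
move=> hn htree hedge hG hA haut hst.
have sym : forall i (x y : V i), adj i x y -> adj i y x.
  by move=> i x y; case: (htree i) => h _ _ _; apply: h.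
have irr : forall i (x : V i), ~ adj i x x.
  by move=> i x; case: (htree i) => _ h _ _; apply: h.
apply: (main sym irr hG hA haut hst).
have n0 : 0 < n by apply: leq_trans hn.
pose i0 : 'I_n := Ordinal n0.
have [e he] : exists e, adj i0 (b i0) e.
  have [x [y hxy]] := hedge i0.
  have [_ _ conn _] := htree i0.
  have [s [hs hl]] := conn (b i0) x.
  case: s hs hl => [|e s] /=; first by move=> _ ->; exists y.
  by case=> h _ _; exists e.
exists (upd b e); exists i0; split; first by rewrite upd_eq.
by move=> k nk; rewrite upd_neq.
Qed.
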